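(* Let $p=(p_i)_{i\in\mathbb{N}}$ be a cookie environment with $p_i\in[\frac12,1)$ for all $i$, and suppose $\delta=\sum_{i=1}^\infty(2p_i-1)<\infty$. Let $\rho(x)=\mathbb{E}[U_p(x)]-x$. Then $\lim_{x\to\infty}\rho(x)=\delta$, and furthermore $\rho(x)\le\delta$ for all positive integers $x$.
   Context: For a cookie environment $p$, let $B_1,B_2,\dots$ be independent Bernoulli random variables with $\Pr[B_i=1]=p_i$ ($B_i=1$ is a ''success'', $B_i=0$ a ''failure''). For a positive integer $x$, $U_p(x)=\inf\{k\in\mathbb{N}:\sum_{i=1}^k(1-B_i)=x\}-x$, i.e. the number of successes before the $x$-th failure. *)

(* Defs.v *)
From HB Require Import structures.
From mathcomp Require Import all_boot all_order all_algebra.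
From mathcomp Require Import all_classical all_reals all_analysis.
Set Implicit Arguments. Unset Strict Implicit. Unset Printing Implicit Defensive.
Import Order.TTheory GRing.Theory Num.Theory numFieldNormedType.Exports.
Local Open Scope classical_set_scope.
Local Open Scope ring_scope.

(* Trials are indexed from 0: [B i] stands for the paper's B_{i+1},
   and [p i] for the paper's p_{i+1}. *)

Definition mutually_independent_bool d (T : measurableType d) (R : realType)
    (P : probability T R) (B : nat -> T -> bool) : Prop :=
  forall (s : seq nat) (b : nat -> bool), uniq s ->
    P (\bigcap_(i in [set` s]) [set w | B i w = b i]) =
    (\prod_(i <- s) P [set w | B i w = b i])%E.

Definition nfail T (B : nat -> T -> bool) (k : nat) (w : T) : nat :=
  \sum_(i < k) (~~ B i w : nat).

(* U_p(x) = inf{k : sum_{i<=k} (1 - B_i) = x} - x, an extended real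
   (equal to +oo when the x-th failure never occurs). *)
Definition Ucookie (R : realType) T (B : nat -> T -> bool) (x : nat) (w : T)
  : \bar R :=
  ereal_inf [set ((k - x)%:R)%:E | k in [set k | nfail B k w = x]].

(* Main.v *)
Require Import Defs.
From HB Require Import structures.
From mathcomp Require Import all_boot all_order all_algebra.
From mathcomp Require Import all_classical all_reals all_analysis.
From mathcomp Require Import ring lra zify.
Import Order.TTheory GRing.Theory Num.Theory numFieldNormedType.Exports.
Local Open Scope classical_set_scope.
Local Open Scope ring_scope.

Section Cookie.
Variables (d : measure_display) (T : measurableType d) (R : realType).
Variables (P : probability T R) (p : nat -> R) (B : nat -> T -> bool).
Hypothesis hp : forall i, 1 / 2 <= p i < 1.
Hypothesis mB : forall i, measurable [set w | B i w = true].
Hypothesis PB : forall i, P [set w | B i w = true] = (p i)%:E.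
Hypothesis ind : mutually_independent_bool P B.

Definition pr (A : set T) : R := fine (P A).

Lemma prE A : measurable A -> (pr A)%:E = P A.
Proof. by move=> mA; rewrite /pr fineK // (fin_num_measure P A mA). Qed.

Lemma prU A C : measurable A -> measurable C -> A `&` C = set0 ->
  pr (A `|` C) = pr A + pr C.
Proof.
move=> mA mC AC; apply: EFin_inj; rewrite EFinD !prE //; last exact: measurableU.
exact: measureU.
Qed.

Lemma pr_ge0 A : 0 <= pr A.
Proof. exact: fine_ge0. Qed.

Lemma pr_le1 A : measurable A -> pr A <= 1.
Proof. by move=> mA; rewrite -lee_fin prE // probability_le1. Qed.

Lemma pr0 : pr set0 = 0.
Proof. by rewrite /pr measure0. Qed.

Lemma prT : pr setT = 1.
Proof. by rewrite /pr probability_setT. Qed.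

Definition Bs i c := [set w | B i w = c].

Lemma mBs i c : measurable (Bs i c).
Proof.
case: c; first exact: mB.
have -> : Bs i false = ~` [set w | B i w = true].
  by rewrite /Bs; apply/seteqP; split => w /=; case: (B i w) => // /(_ erefl).
apply: measurableC; exact: mB.
Qed.

Lemma prBs i c : pr (Bs i c) = if c then p i else 1 - p i.
Proof.
case: c; first by rewrite /pr /Bs PB.
have -> : Bs i false = ~` [set w | B i w = true].
  by rewrite /Bs; apply/seteqP; split => w /=; case: (B i w) => // /(_ erefl).
by rewrite /pr probability_setC // PB.
Qed.

Definition Fn n y := [set w | (nfail B n w < y)%N].

Lemma nfailS n w : nfail B n.+1 w = (nfail B n w + ~~ B n w)%N.
Proof. by rewrite /nfail big_ord_recr. Qed.

Lemma Fn0 n : Fn n 0 = set0.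
Proof. by apply/seteqP; split => w //=. Qed.

Lemma F0n y : Fn 0 y.+1 = setT.
Proof. by apply/seteqP; split => w //= _; rewrite /Fn /= /nfail big_ord0. Qed.

Lemma FnS n y : Fn n.+1 y.+1 = (Fn n y.+1 `&` Bs n true) `|` (Fn n y `&` Bs n false).
Proof.
apply/seteqP; split => w /=; rewrite /Fn /Bs /= nfailS.
  by case: (B n w) => /= h; [left; rewrite addn0 in h | right; rewrite addn1 ltnS in h].
by case: (B n w) => /= -[[h1 h2]|[h1 h2]] //; rewrite ?addn0 ?addn1 ?ltnS.
Qed.

Lemma Fn_disj n y : (Fn n y.+1 `&` Bs n true) `&` (Fn n y `&` Bs n false) = set0.
Proof. by apply/seteqP; split => w //= -[[_ h1] [_ h2]]; rewrite /Bs /= h1 in h2. Qed.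

Lemma mFn n y : measurable (Fn n y).
Proof.
elim: n y => [|n IH] [|y]; rewrite ?Fn0 ?F0n //.
rewrite FnS; apply: measurableU; apply: measurableI => //; exact: mBs.
Qed.

Definition Cyl (s : seq nat) (b : nat -> bool) := \bigcap_(i in [set` s]) Bs i (b i).

Lemma mCyl s b : measurable (Cyl s b).
Proof. apply: fin_bigcap_measurable; first exact: finite_seq. by move=> i _; exact: mBs. Qed.

Lemma prCyl s b : uniq s -> pr (Cyl s b) = \prod_(i <- s) pr (Bs i (b i)).
Proof.
move=> us; apply: EFin_inj; rewrite prE; last exact: mCyl.
rewrite /Cyl /Bs ind // -prodEFin; apply: eq_bigr => i _.
by rewrite prE //; exact: mBs.
Qed.

Lemma Cyl_cons n s b c : n \notin s ->
  Cyl (n :: s) (fun i => if i == n then c else b i) = Bs n c `&` Cyl s b.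
Proof.
move=> ns.
rewrite /Cyl.
have -> : [set` (n :: s)] = n |` [set` s].
  apply/seteqP; split => i /=; rewrite inE.
    by case/orP => [/eqP ->|h]; [left|right].
  by case => [->|h]; rewrite ?eqxx ?h ?orbT.
rewrite bigcap_setU1 eqxx; congr (_ `&` _); apply: eq_bigcapr => i /= si.
by case: eqP => // ein; rewrite -ein si in ns.
Qed.

Lemma indep_claim n y s b : uniq s -> all (fun i => n <= i)%N s ->
  pr (Fn n y `&` Cyl s b) = pr (Fn n y) * pr (Cyl s b).
Proof.
elim: n y s b => [|n IH] [|y] s b us alls.
- by rewrite Fn0 set0I pr0 mul0r.
- by rewrite F0n setTI prT mul1r.
- by rewrite Fn0 set0I pr0 mul0r.
have ns : n \notin s.
  by apply/negP => /(allP alls); rewrite ltnn.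
have alls' : all (fun i => n <= i)%N (n :: s).
  rewrite /= leqnn /=; apply/allP => i /(allP alls); exact: ltnW.
have us' : uniq (n :: s) by rewrite /= ns.
have key : forall s' b', uniq s' -> all (fun i => n < i)%N s' ->
  pr (Fn n.+1 y.+1 `&` Cyl s' b') =
  (pr (Fn n y.+1) * p n + pr (Fn n y) * (1 - p n)) * pr (Cyl s' b').
  move=> s' b' us1 all1.
  have ns1 : n \notin s' by apply/negP => /(allP all1); rewrite ltnn.
  have all1' : all (fun i => n <= i)%N (n :: s').
    rewrite /= leqnn /=; apply/allP => i /(allP all1); exact: ltnW.
  have us1' : uniq (n :: s') by rewrite /= ns1.
  rewrite FnS setIUl prU; first last.
  - apply/seteqP; split => w //= -[[[_ h1] _] [[_ h2] _]]; by rewrite /Bs /= h1 in h2.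
  - by apply: measurableI; [apply: measurableI; [exact: mFn|exact: mBs]|exact: mCyl].
  - by apply: measurableI; [apply: measurableI; [exact: mFn|exact: mBs]|exact: mCyl].
  rewrite -!setIA -(@Cyl_cons n s' b' true ns1) -(@Cyl_cons n s' b' false ns1) !IH //.
  rewrite (@Cyl_cons n s' b' true ns1) (@Cyl_cons n s' b' false ns1).
  have h c : pr (Bs n c `&` Cyl s' b') = pr (Bs n c) * pr (Cyl s' b').
    rewrite -(@Cyl_cons n s' b' c ns1) prCyl // big_cons eqxx prCyl //; congr (_ * _).
    apply: eq_big_seq => i si; case: eqP => // ein.
    by rewrite -ein si in ns1.
  by rewrite !h !prBs; ring.
rewrite key //.
have := key [::] (fun _ => true) isT isT.
by rewrite /Cyl /= set_nil bigcap_set0 setIT prT mulr1 => <-.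
Qed.

Lemma nfail_le n w : (nfail B n w <= n)%N.
Proof.
elim: n => [|n IH]; first by rewrite /nfail big_ord0.
rewrite nfailS; case: (B n w) => /=; [rewrite addn0; exact: leqW|by rewrite addn1].
Qed.

Lemma nfail_mono m n w : (m <= n)%N -> (nfail B m w <= nfail B n w)%N.
Proof.
move=> /subnK <-; elim: (n - m)%N => [|k IH]; first by rewrite add0n.
rewrite addSn nfailS; exact: leq_trans IH (leq_addr _ _).
Qed.

Lemma sumB n w : (\sum_(i < n) (B i w : nat) + nfail B n w)%N = n.
Proof.
elim: n => [|n IH]; first by rewrite /nfail !big_ord0.
rewrite big_ord_recr /= nfailS.
move: IH; set a := (\sum_(i < n) _)%N; set c := nfail B n w.
by case: (B n w) => /= IH; lia.
Qed.

Definition A i x := Bs i true `&` Fn i x.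

Lemma mA i x : measurable (A i x).
Proof. apply: measurableI; [exact: mBs|exact: mFn]. Qed.

Lemma prA i x : pr (A i x) = p i * pr (Fn i x).
Proof.
have := @indep_claim i x [:: i] (fun _ => true) isT.
rewrite /= leqnn => /(_ isT).
rewrite /Cyl set_cons1 bigcap_set1 prBs => h.
by rewrite /A setIC h mulrC.
Qed.

Lemma indicA i x w :
  \1_(A i x) w = ((B i w && (nfail B i w < x)%N) : nat)%:R :> R.
Proof.
rewrite indicE; congr (_ %:R); congr (nat_of_bool _).
apply/idP/idP => [|/andP[h1 h2]]; last by rewrite mem_set.
by rewrite in_setE => -[h1 h2]; apply/andP; split.
Qed.

Lemma psum x w N : (\sum_(0 <= i < N) (\1_(A i x) w : R)%:E)%E =
  ((\sum_(i < N) ((B i w && (nfail B i w < x)%N) : nat))%:R)%:E.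
Proof.
rewrite sumEFin natr_sum big_mkord; congr (_%:E); apply: eq_bigr => i _.
exact: indicA.
Qed.

Lemma Ucookie_sum x w : Ucookie R B x w = (\sum_(0 <= i <oo) (\1_(A i x) w : R)%:E)%E.
Proof.
have ge0 : forall i, (0 <= (\1_(A i x) w : R)%:E)%E.
  by move=> i; rewrite lee_fin indicA.
case: (pselect (exists k, nfail B k w = x)) => [ex|nex].
  pose k0 := ex_minn (P := fun k => nfail B k w == x) (let: ex_intro k hk := ex in ex_intro _ k (introT eqP hk)).
  have [hk0 mink0] : nfail B k0 w = x /\ (forall k, nfail B k w = x -> (k0 <= k)%N).
    rewrite /k0; case: ex_minnP => m /eqP hm hmin; split => // k hk; apply: hmin; exact/eqP.
  have lt_k0 : forall i, (i < k0)%N -> (nfail B i w < x)%N.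
    move=> i ik; rewrite ltn_neqAle; apply/andP; split.
      by apply/eqP => /mink0; rewrite leqNgt ik.
    by rewrite -hk0 nfail_mono // ltnW.
  have Sk0 : (\sum_(i < k0) ((B i w && (nfail B i w < x)%N) : nat))%N = (k0 - x)%N.
    have e : (\sum_(i < k0) ((B i w && (nfail B i w < x)%N) : nat))%N = (\sum_(i < k0) (B i w : nat))%N.
      by apply: eq_bigr => i _; rewrite lt_k0 ?andbT.
    by rewrite e -hk0 -[X in (_ = X - _)%N](sumB k0 w) addnK.
  have SN : forall N, (k0 <= N)%N -> (\sum_(i < N) ((B i w && (nfail B i w < x)%N) : nat))%N = (k0 - x)%N.
    move=> N /subnK <-; elim: (N - k0)%N => [|k IH]; first by rewrite add0n.
    rewrite addSn big_ord_recr /= IH.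
    have : (x <= nfail B (k + k0) w)%N by rewrite -hk0 nfail_mono // leq_addl.
    by rewrite leqNgt => /negbTE ->; rewrite andbF addn0.
  have -> : Ucookie R B x w = ((k0 - x)%:R)%:E.
    apply/eqP; rewrite eq_le; apply/andP; split.
      by apply: ereal_inf_lbound; exists k0.
    apply/ereal_infP => _ [k /= hk <-]; rewrite lee_fin ler_nat.
    exact/leq_sub2r/mink0.
  apply/esym/cvg_lim => //; apply: cvg_near_cst; near=> N.
  rewrite psum SN //; near: N; exists k0 => //.
have allx : forall k, (nfail B k w < x)%N.
  elim => [|k IH].
    rewrite /nfail big_ord0 lt0n; apply/eqP => x0; apply: nex; exists 0%N.
    by rewrite /nfail big_ord0.
  rewrite ltn_neqAle; apply/andP; split.
    by apply/eqP => h; apply: nex; exists k.+1.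
  by rewrite nfailS; case: (B k w); rewrite /= ?addn0 ?addn1 // ltnW.
have -> : Ucookie R B x w = +oo%E.
  rewrite /Ucookie.
  have -> : [set k | nfail B k w = x] = set0.
    by apply/seteqP; split => k //= hk; apply: nex; exists k.
  by rewrite image_set0 ereal_inf0.
apply/esym/eq_infty => r.
have := @nneseries_lim_ge R (fun i => (\1_(A i x) w : R)%:E) xpredT 0%N (x + (Num.Def.trunc r).+1)%N (fun i _ _ => ge0 i).
apply: le_trans; rewrite psum lee_fin.
set N := (x + _)%N.
have -> : (\sum_(i < N) ((B i w && (nfail B i w < x)%N) : nat))%N = (N - nfail B N w)%N.
  rewrite -[X in (_ = X - _)%N](sumB N w) addnK; apply: eq_bigr => i _; by rewrite allx andbT.
apply: (le_trans (ltW (truncnS_gt r))); rewrite ler_nat.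
rewrite /N leq_subRL; last by apply: (leq_trans (ltnW (allx N))); exact: leq_addr.
by rewrite leq_add2r ltnW.
Unshelve. all: end_near.
Qed.

Lemma EU x : (\int[P]_w Ucookie R B x w)%E = (\sum_(0 <= i <oo) (p i * pr (Fn i x))%:E)%E.
Proof.
under eq_integral => w _ do rewrite Ucookie_sum.
rewrite integral_nneseries //.
- apply: eq_eseriesr => i _.
  rewrite integral_indic //; last exact: mA.
  by rewrite setIT -prA prE //; exact: mA.
- move=> n; apply/measurable_realfun.measurable_EFinP; exact: measurable_realfun.measurable_indic (mA n x).
Qed.

Definition r n y := pr (Fn n y).

Lemma r_ge0 n y : 0 <= r n y. Proof. exact: pr_ge0. Qed.
Lemma r_le1 n y : r n y <= 1. Proof. exact/pr_le1/mFn. Qed.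
Lemma rn0 n : r n 0 = 0. Proof. by rewrite /r Fn0 pr0. Qed.
Lemma r0S y : r 0 y.+1 = 1. Proof. by rewrite /r F0n prT. Qed.

Lemma r_big n y : (n < y)%N -> r n y = 1.
Proof.
move=> ny; rewrite /r (_ : Fn n y = setT) ?prT //.
apply/seteqP; split => w //= _; rewrite /Fn /=; exact: leq_ltn_trans (nfail_le n w) ny.
Qed.

Lemma prFB n y c : pr (Fn n y `&` Bs n c) = r n y * pr (Bs n c).
Proof.
have := @indep_claim n y [:: n] (fun _ => c) isT.
by rewrite /= leqnn => /(_ isT); rewrite /Cyl set_cons1 bigcap_set1.
Qed.

Lemma rS n y : r n.+1 y.+1 = p n * r n y.+1 + (1 - p n) * r n y.
Proof.
rewrite {1}/r FnS prU; first last.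
- exact: Fn_disj.
- by apply: measurableI; [exact: mFn|exact: mBs].
- by apply: measurableI; [exact: mFn|exact: mBs].
by rewrite !prFB !prBs; ring.
Qed.

Lemma sum1p x N : \sum_(n < N) (1 - p n) * r n x = x%:R - \sum_(y < x) r N y.+1.
Proof.
elim: N => [|N IH].
  rewrite big_ord0 (eq_bigr (fun _ => 1)) => [|y _]; last exact: r0S.
  by rewrite sumr_const card_ord subrr.
rewrite big_ord_recr /= IH.
have tel : \sum_(y < x) (r N y.+1 - r N y) = r N x.
  by rewrite -(big_mkord xpredT (fun y => r N y.+1 - r N y)) telescope_sumr // rn0 subr0.
have -> : \sum_(y < x) r N.+1 y.+1 = \sum_(y < x) r N y.+1 - (1 - p N) * r N x.
  rewrite -tel mulr_sumr -sumrB; apply: eq_bigr => y _; rewrite rS; ring.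
ring.
Qed.

Lemma t_ge0 n : 0 <= 2 * p n - 1.
Proof. by move: (hp n) => /andP[h1 h2]; lra. Qed.

Lemma p_ge n : 0 <= 1 - p n.
Proof. by move: (hp n) => /andP[h1 h2]; lra. Qed.

Variable delta : R.
Hypothesis hdelta : series (fun i => 2 * p i - 1) @ \oo --> delta.

Lemma r_to0 x : (fun n => r n x) @ \oo --> 0.
Proof.
have hs : cvgn (series (fun n => (1 - p n) * r n x)).
  apply: nondecreasing_is_cvgn.
    apply: nondecreasing_series => n _ _; apply: mulr_ge0; [exact: p_ge|exact: r_ge0].
  exists x%:R => _ [N _ <-]; rewrite /series /= big_mkord sum1p lerBlDr lerDl.
  by apply: sumr_ge0 => y _; exact: r_ge0.
have h0 := cvg_series_cvg_0 hs.
have h1 := cvg_series_cvg_0 (cvgP _ hdelta).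
have h2 : (fun n => 2 * ((1 - p n) * r n x)) @ \oo --> (2 * 0 : R) by apply: cvgMr.
have h3 : (fun n => 2 * ((1 - p n) * r n x) + (2 * p n - 1)) @ \oo --> (2 * 0 + 0 : R).
  exact: cvgD.
rewrite mulr0 addr0 in h3.
apply: (@squeeze_cvgr _ _ _ _ (fun _ => 0) _ (fun n => r n x) _ 0 _ h3); last first.
  exact: cvg_cst.
near=> n; rewrite r_ge0 /=.
have := r_le1 n x; have := r_ge0 n x; move: (hp n) => /andP[h4 h5] h6 h7; nra.
Unshelve. all: end_near.
Qed.

Lemma sum1p_lim x : series (fun n => (1 - p n) * r n x) @ \oo --> (x%:R : R).
Proof.
have -> : series (fun n => (1 - p n) * r n x) = (fun N => x%:R - \sum_(y < x) r N y.+1).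
  by apply/funext => N; rewrite /series /= big_mkord sum1p.
have h : forall z, (fun N => \sum_(y < z) r N y.+1) @ \oo --> 0.
  elim => [|z IH].
    under eq_fun do rewrite big_ord0. exact: cvg_cst.
  under eq_fun do rewrite big_ord_recr /=.
  have h : (fun N => \sum_(y < z) r N y.+1 + r N z.+1) @ \oo --> (0 + 0 : R).
    by apply: cvgD => //; exact: r_to0.
  by rewrite addr0 in h.
have h2 : (fun N => x%:R - \sum_(y < x) r N y.+1) @ \oo --> (x%:R - 0 : R).
  by apply: cvgB => //; exact: cvg_cst.
by rewrite subr0 in h2.
Qed.

Definition t x n := (2 * p n - 1) * r n x.

Lemma sdelta_le N : series (fun i => 2 * p i - 1) N <= delta.
Proof.
have := nondecreasing_cvgn_le (nondecreasing_series (fun n _ _ => t_ge0 n)) (cvgP _ hdelta) N.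
by rewrite (cvg_lim _ hdelta).
Qed.

Lemma series_t_le x N : series (t x) N <= series (fun i => 2 * p i - 1) N.
Proof.
rewrite /series /=; apply: ler_sum => i _; rewrite /t.
by rewrite ler_piMr ?t_ge0 ?r_le1.
Qed.

Lemma t_cvg x : cvgn (series (t x)).
Proof.
apply: nondecreasing_is_cvgn.
  by apply: nondecreasing_series => n _ _; apply: mulr_ge0; [exact: t_ge0|exact: r_ge0].
by exists delta => _ [N _ <-]; exact: le_trans (series_t_le x N) (sdelta_le N).
Qed.

Definition rho x := limn (series (t x)).

Lemma rho_le x : rho x <= delta.
Proof.
apply: limr_le; first exact: t_cvg.
by apply: nearW => N; exact: le_trans (series_t_le x N) (sdelta_le N).
Qed.

Lemma rho_ge x : series (fun i => 2 * p i - 1) x <= rho x.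
Proof.
have -> : series (fun i => 2 * p i - 1) x = series (t x) x.
  rewrite /series /= !big_mkord; apply: eq_bigr => i _.
  by rewrite /t r_big ?mulr1.
apply: nondecreasing_cvgn_le; last exact: t_cvg.
by apply: nondecreasing_series => n _ _; apply: mulr_ge0; [exact: t_ge0|exact: r_ge0].
Qed.

Lemma EU_rho x : (\int[P]_w Ucookie R B x w - (x%:R)%:E)%E = (rho x)%:E.
Proof.
rewrite EU.
have hc : series (fun i => p i * r i x) @ \oo --> x%:R + rho x.
  have -> : series (fun i => p i * r i x) =
      (fun N => series (fun n => (1 - p n) * r n x) N + series (t x) N).
    apply/funext => N; rewrite /series /= -big_split /=; apply: eq_bigr => i _.
    rewrite /t; ring.
  apply: cvgD; [exact: sum1p_lim|exact: t_cvg].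
have -> : (\sum_(0 <= i <oo) (p i * pr (Fn i x))%:E)%E = (x%:R + rho x)%:E.
  rewrite -(cvg_lim _ hc) // -EFin_lim; last exact: cvgP hc.
  congr (limn _); apply/funext => N; rewrite /= sumEFin.
  done.
by rewrite -EFinB; congr (_%:E); ring.
Qed.

Lemma rho_cvg : rho x @[x --> \oo] --> delta.
Proof.
apply: (squeeze_cvgr _ hdelta (cvg_cst delta)).
by apply: nearW => x; rewrite rho_ge rho_le.
Qed.

End Cookie.

Theorem lemma4p1 (d : measure_display) (T : measurableType d) (R : realType)
  (P : probability T R) (p : nat -> R) (B : nat -> T -> bool) (delta : R) :
  (forall i, 1 / 2 <= p i < 1) ->
  (forall i, measurable [set w | B i w = true]) ->
  (forall i, P [set w | B i w = true] = (p i)%:E) ->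
  mutually_independent_bool P B ->
  series (fun i => 2 * p i - 1) @ \oo --> delta ->
  ((fun x : nat => (\int[P]_w Ucookie R B x w - (x%:R)%:E)%E) @ \oo --> delta%:E)
  /\ (forall x : nat, (0 < x)%N ->
        (\int[P]_w Ucookie R B x w - (x%:R)%:E <= delta%:E)%E).
Proof.
move=> hp mB PB ind hdelta; split.
  under eq_fun do rewrite (EU_rho d T R P p B hp mB PB ind delta hdelta).
  apply: cvg_EFin; first by apply: nearW.
  exact: (rho_cvg d T R P p B hp mB delta hdelta).
move=> x _; rewrite (EU_rho d T R P p B hp mB PB ind delta hdelta) lee_fin.
exact: (rho_le d T R P p B hp mB delta hdelta).
Qed.
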